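(* The generalized categories (as 0-cells), the functors between them (as 1-cells), and the natural transformations between such functors (as 2-cells) form a strict 2-category. Here 1-cells compose by composition of maps; vertical composition of natural transformations $\alpha: F \Rightarrow G$ and $\beta: G \Rightarrow H$ between functors $F,G,H:\mathcal{C}\to\mathcal{D}$ is $(\beta \circ \alpha)(x) = \beta(x)\cdot\alpha(x)$; the identity 2-cell on $F$ is $x \mapsto 1_{F(x)}$; and horizontal composition $\beta\star\alpha$ of $\alpha: F\Rightarrow G$ (with $F,G:\mathcal{C}\to\mathcal{D}$) and $\beta: F'\Rightarrow G'$ (with $F',G':\mathcal{D}\to\mathcal{E}$) is given by the same formula as for ordinary categories, $(\beta\star\alpha)(x) = G'(\alpha(x))\cdot \beta(F(x))$.
   Context: A generalized category is a tuple $(\mathcal{C},\le,s,t,\cdot)$ where $\mathcal{C}$ is a set, $\le$ a relation on $\mathcal{C}$, $s,t:\mathcal{C}\to\mathcal{C}$ maps (write $\bar a = s(a)$, $\hat a = t(a)$), and $\cdot$ a partially defined binary operation (write $ab$), such that: (1) $\le$ is a partial order; (2) $ab$ is defined iff $s(a)\le t(b)$; (3) if $(ab)c$ or $a(bc)$ is defined then $(ab)c=a(bc)$; (4) if $ab$ is defined then $s(ab)=s(b)$ and $t(ab)=t(a)$; (5) for every $a$ there is $b$ with $s(b)=t(b)=a$ such that $bc=c$ whenever $bc$ is defined and $cb=c$ whenever $cb$ is defined; this $b$ is unique, denoted $1_a$; (6) if $s(a)=t(a)=a$ then $ba=b$ whenever $ba$ is defined and $ab=b$ whenever $ab$ is defined;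 (7) if $a\le b$ then $s(a)\le s(b)$, $t(a)\le t(b)$ and $1_a\le 1_b$; and if $a\le b$, $c\le d$ and $ac,bd$ are defined then $ac\le bd$. A functor $F:\mathcal{C}\to\mathcal{D}$ is a map with $a\le b\Rightarrow F(a)\le F(b)$, $F(\bar a)=\overline{F(a)}$, $F(\hat a)=\widehat{F(a)}$, $F(ab)=F(a)F(b)$ whenever $ab$ is defined, and $F(1_a)=1_{F(a)}$. For functors $F,G:\mathcal{C}\to\mathcal{D}$, a natural transformation $F\Rightarrow G$ is a pair $(\theta_1,\theta_2)$ of maps $\mathcal{C}\to\mathcal{D}$ such that for all $a$, $\theta_1(a)F(a)$ and $G(a)\theta_2(a)$ are defined and equal, $\theta_1(a)=\theta_1(b)$ whenever $\hat a=\hat b$, and $\theta_2(a)=\theta_2(b)$ whenever $\bar a=\bar b$. Then $\theta_1(1_x)=\theta_2(1_x)$ for all $x$, and the transformation is identified with the single map $\theta(x):=\theta_1(1_x)$, which satisfies $\theta(\hat f)\cdot F(f)=G(f)\cdot\theta(\bar f)$ for all $f$. *)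

(* Defs.v *)
(* The partial product [ab] is modelled by a total
   function [mul] whose value is only meaningful when [ab] is defined, i.e.
   (axiom (2)) exactly when [src a <= tgt b]; see [defined] below. *)
Record GenCat := {
  obj :> Type;
  le : obj -> obj -> Prop;
  src : obj -> obj;
  tgt : obj -> obj;
  mul : obj -> obj -> obj;
  one : obj -> obj;
  le_refl : forall a, le a a;
  le_antisym : forall a b, le a b -> le b a -> a = b;
  le_trans : forall a b c, le a b -> le b c -> le a c;
  (* (3) if (ab)c or a(bc) is defined, both are defined and equal *)
  mul_assoc : forall a b c,
    (le (src a) (tgt b) /\ le (src (mul a b)) (tgt c)) \/
    (le (src b) (tgt c) /\ le (src a) (tgt (mul b c))) ->
    le (src a) (tgt b) /\ le (src (mul a b)) (tgt c) /\
    le (src b) (tgt c) /\ le (src a) (tgt (mul b c)) /\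
    mul (mul a b) c = mul a (mul b c);
  src_mul : forall a b, le (src a) (tgt b) -> src (mul a b) = src b;
  tgt_mul : forall a b, le (src a) (tgt b) -> tgt (mul a b) = tgt a;
  src_one : forall a, src (one a) = a;
  tgt_one : forall a, tgt (one a) = a;
  one_mull : forall a c, le (src (one a)) (tgt c) -> mul (one a) c = c;
  one_mulr : forall a c, le (src c) (tgt (one a)) -> mul c (one a) = c;
  one_unique : forall a b, src b = a -> tgt b = a ->
    (forall c, le (src b) (tgt c) -> mul b c = c) ->
    (forall c, le (src c) (tgt b) -> mul c b = c) -> b = one a;
  fixed_unit : forall a, src a = a -> tgt a = a ->
    (forall b, le (src b) (tgt a) -> mul b a = b) /\
    (forall b, le (src a) (tgt b) -> mul a b = b);
  le_src_tgt_one : forall a b, le a b ->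
    le (src a) (src b) /\ le (tgt a) (tgt b) /\ le (one a) (one b);
  le_mul : forall a b c d, le a b -> le c d ->
    le (src a) (tgt c) -> le (src b) (tgt d) -> le (mul a c) (mul b d)
}.

Arguments le {_}.
Arguments src {_}.
Arguments tgt {_}.
Arguments mul {_}.
Arguments one {_}.

Definition defined {C : GenCat} (a b : C) : Prop := le (src a) (tgt b).

Definition is_functor {C D : GenCat} (F : C -> D) : Prop :=
  (forall a b : C, le a b -> le (F a) (F b)) /\
  (forall a : C, F (src a) = src (F a)) /\
  (forall a : C, F (tgt a) = tgt (F a)) /\
  (forall a b : C, defined a b -> F (mul a b) = mul (F a) (F b)) /\
  (forall a : C, F (one a) = one (F a)).

Definition is_nat_pair {C D : GenCat} (F G : C -> D) (t1 t2 : C -> D) : Prop :=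
  (forall a : C, defined (t1 a) (F a) /\ defined (G a) (t2 a) /\
                 mul (t1 a) (F a) = mul (G a) (t2 a)) /\
  (forall a b : C, tgt a = tgt b -> t1 a = t1 b) /\
  (forall a b : C, src a = src b -> t2 a = t2 b).

(* A 2-cell F => G between functors: a natural transformation, identified
   with its single map theta(x) := theta1(1_x). *)
Definition is_2cell {C D : GenCat} (F G : C -> D) (theta : C -> D) : Prop :=
  is_functor F /\ is_functor G /\
  exists t1 t2 : C -> D, is_nat_pair F G t1 t2 /\
    forall x : C, theta x = t1 (one x).

Definition id1 (C : GenCat) : C -> C := fun x => x.
Definition comp1 {C D E : GenCat} (G : D -> E) (F : C -> D) : C -> E :=
  fun x => G (F x).

Definition id2 {C D : GenCat} (F : C -> D) : C -> D := fun x => one (F x).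

Definition vcomp {C D : GenCat} (beta alpha : C -> D) : C -> D :=
  fun x => mul (beta x) (alpha x).

Definition hcomp {C D E : GenCat} (F : C -> D) (G' : D -> E)
    (beta : D -> E) (alpha : C -> D) : C -> E :=
  fun x => mul (G' (alpha x)) (beta (F x)).

(* Main.v *)
Require Import Defs.

Lemma massoc (C:GenCat) (a b c : C) : src a = tgt b -> src b = tgt c ->
  mul (mul a b) c = mul a (mul b c).
Proof. intros H1 H2. destruct (mul_assoc C a b c) as (_&_&_&_&E); [|exact E].
 left. split. rewrite H1; apply le_refl. rewrite src_mul. rewrite H2; apply le_refl.
 rewrite H1; apply le_refl. Qed.

Lemma msrc (C:GenCat) (a b : C) : src a = tgt b -> src (mul a b) = src b.
Proof. intros H; apply src_mul; rewrite H; apply le_refl. Qed.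
Lemma mtgt (C:GenCat) (a b : C) : src a = tgt b -> tgt (mul a b) = tgt a.
Proof. intros H; apply tgt_mul; rewrite H; apply le_refl. Qed.

Section F.
Context {C D : GenCat} (F : C -> D) (HF : is_functor F).
Lemma fmono a b : le a b -> le (F a) (F b). Proof. apply HF. Qed.
Lemma fsrc a : F (src a) = src (F a). Proof. apply HF. Qed.
Lemma ftgt a : F (tgt a) = tgt (F a). Proof. apply HF. Qed.
Lemma fone a : F (one a) = one (F a). Proof. apply HF. Qed.
Lemma fmul a b : src a = tgt b -> F (mul a b) = mul (F a) (F b).
Proof. intros H; apply HF. unfold defined; rewrite H; apply le_refl. Qed.
End F.

Lemma two_props {C D : GenCat} (F G th : C -> D) : is_2cell F G th ->
  is_functor F /\ is_functor G /\ (forall x, src (th x) = F x) /\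
  (forall x, tgt (th x) = G x) /\
  (forall a, mul (th (tgt a)) (F a) = mul (G a) (th (src a))).
Proof.
 intros (HF&HG&t1&t2&((Hn&Hd1&Hd2)&Ht)).
 assert (E12 : forall x, t1 (one x) = t2 (one x)).
 { intro x. destruct (Hn (one x)) as (D1&D2&E). unfold defined in *.
   rewrite (fone F HF), (fone G HG) in *.
   rewrite one_mulr in E by exact D1. rewrite one_mull in E by exact D2. exact E. }
 assert (K1 : forall a, t1 a = th (tgt a)).
 { intro a. rewrite Ht. apply Hd1. rewrite tgt_one. reflexivity. }
 assert (K2 : forall a, t2 a = th (src a)).
 { intro a. rewrite Ht, E12. apply Hd2. rewrite src_one. reflexivity. }
 split; [exact HF|]. split; [exact HG|].
 split; [|split].
 - intro x. rewrite Ht, E12. destruct (Hn (one x)) as (D1&D2&E).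
   rewrite <- (src_mul _ _ _ D2), <- E, (src_mul _ _ _ D1), (fone F HF), src_one.
   reflexivity.
 - intro x. rewrite Ht. destruct (Hn (one x)) as (D1&D2&E).
   rewrite <- (tgt_mul _ _ _ D1), E, (tgt_mul _ _ _ D2), (fone G HG), tgt_one.
   reflexivity.
 - intro a. rewrite <- K1, <- K2. apply Hn.
Qed.

Lemma mk2 {C D : GenCat} (F G th : C -> D) : is_functor F -> is_functor G ->
  (forall x, src (th x) = F x) -> (forall x, tgt (th x) = G x) ->
  (forall a, mul (th (tgt a)) (F a) = mul (G a) (th (src a))) -> is_2cell F G th.
Proof.
 intros HF HG Hs Ht Hn. split; [exact HF|]. split; [exact HG|].
 exists (fun a => th (tgt a)), (fun a => th (src a)).
 split; [|intro x; rewrite tgt_one; reflexivity].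
 split; [|split; intros a b E; rewrite E; reflexivity].
 intro a. unfold defined. rewrite Hs, Ht, (ftgt F HF), (fsrc G HG).
 split; [apply le_refl|split; [apply le_refl|apply Hn]].
Qed.


Lemma p_id (C : GenCat) : is_functor (id1 C).
Proof. unfold is_functor, id1. repeat split; auto. Qed.

Lemma p_comp (C D E : GenCat) (F : C -> D) (G : D -> E) :
  is_functor F -> is_functor G -> is_functor (comp1 G F).
Proof. intros HF HG. unfold comp1. split; [|split; [|split; [|split]]].
 - intros a b H. apply (fmono G HG), (fmono F HF), H.
 - intro a. rewrite (fsrc F HF), (fsrc G HG). reflexivity.
 - intro a. rewrite (ftgt F HF), (ftgt G HG). reflexivity.
 - intros a b H. rewrite (proj1 (proj2 (proj2 (proj2 HF))) a b H).
   apply HG. unfold defined. rewrite <- (fsrc F HF), <- (ftgt F HF).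
   apply (fmono F HF), H.
 - intro a. rewrite (fone F HF), (fone G HG). reflexivity.
Qed.

Lemma p_id2 (C D : GenCat) (F : C -> D) : is_functor F -> is_2cell F F (id2 F).
Proof. intro HF. unfold id2. apply mk2; auto; intros.
 apply src_one. apply tgt_one.
 rewrite (ftgt F HF), (fsrc F HF), one_mull, one_mulr; auto;
 rewrite ?src_one, ?tgt_one; apply le_refl.
Qed.

Lemma p_vcomp (C D : GenCat) (F G H : C -> D) (alpha beta : C -> D) :
  is_2cell F G alpha -> is_2cell G H beta -> is_2cell F H (vcomp beta alpha).
Proof. intros A B.
 destruct (two_props _ _ _ A) as (HF&HG&As&At&An).
 destruct (two_props _ _ _ B) as (_&HH&Bs&Bt&Bn).
 unfold vcomp. apply mk2; auto.
 - intro x. rewrite msrc; rewrite ?Bs, ?At; auto.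
 - intro x. rewrite mtgt; rewrite ?Bs, ?At; auto.
 - intro a. rewrite massoc, An, <- massoc, Bn, massoc; auto;
   rewrite ?Bs, ?At, ?As, ?Bt, ?(ftgt F HF), ?(fsrc G HG), ?(ftgt G HG),
     ?(fsrc H HH), ?(fsrc F HF); auto.
Qed.

Lemma p_vassoc (C D : GenCat) (F G H K : C -> D) (alpha beta gamma : C -> D) :
      is_2cell F G alpha -> is_2cell G H beta -> is_2cell H K gamma ->
      forall x : C,
        vcomp gamma (vcomp beta alpha) x = vcomp (vcomp gamma beta) alpha x.
Proof. intros A B Cc x.
 destruct (two_props _ _ _ A) as (HF&HG&As&At&An).
 destruct (two_props _ _ _ B) as (_&HH&Bs&Bt&Bn).
 destruct (two_props _ _ _ Cc) as (_&HK&Cs&Ct&Cn).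
 unfold vcomp. symmetry; apply massoc; rewrite ?Cs, ?Bt, ?Bs, ?At; auto.
Qed.

Lemma p_vunit (C D : GenCat) (F G : C -> D) (alpha : C -> D) :
      is_2cell F G alpha ->
      forall x : C, vcomp alpha (id2 F) x = alpha x /\ vcomp (id2 G) alpha x = alpha x.
Proof. intros A x.
 destruct (two_props _ _ _ A) as (HF&HG&As&At&An).
 unfold vcomp, id2. split.
 apply one_mulr. rewrite As, tgt_one. apply le_refl.
 apply one_mull. rewrite At, src_one. apply le_refl.
Qed.

Lemma p_hcomp (C D E : GenCat) (F G : C -> D) (F' G' : D -> E) (alpha : C -> D) (beta : D -> E) :
      is_2cell F G alpha -> is_2cell F' G' beta ->
      is_2cell (comp1 F' F) (comp1 G' G) (hcomp F G' beta alpha).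
Proof. intros A B.
 destruct (two_props _ _ _ A) as (HF&HG&As&At&An).
 destruct (two_props _ _ _ B) as (HF'&HG'&Bs&Bt&Bn).
 assert (D1 : forall x, src (G' (alpha x)) = tgt (beta (F x))).
 { intro x. rewrite <- (fsrc G' HG'), As, Bt. reflexivity. }
 unfold hcomp, comp1. apply mk2.
 - apply p_comp; auto.
 - apply p_comp; auto.
 - intro x. rewrite msrc; auto.
 - intro x. rewrite mtgt, <- (ftgt G' HG'), At; auto.
 - intro a. rewrite massoc; auto.
   2:{ rewrite Bs, <- (ftgt F' HF'), (ftgt F HF). reflexivity. }
   rewrite (ftgt F HF), Bn, <- massoc, <- (fmul G' HG'), An, (fmul G' HG'), massoc; auto.
   all: repeat progress (rewrite <- ?(fsrc F HF), <- ?(ftgt F HF), <- ?(fsrc G HG), <- ?(ftgt G HG),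
      <- ?(fsrc F' HF'), <- ?(ftgt F' HF'), <- ?(fsrc G' HG'), <- ?(ftgt G' HG'), ?As, ?At, ?Bs, ?Bt); reflexivity.
Qed.

Ltac norm2 F HF G HG F' HF' G' HG' As At Bs Bt :=
  repeat progress (rewrite <- ?(fsrc F HF), <- ?(ftgt F HF), <- ?(fsrc G HG), <- ?(ftgt G HG),
      <- ?(fsrc F' HF'), <- ?(ftgt F' HF'), <- ?(fsrc G' HG'), <- ?(ftgt G' HG'), ?As, ?At, ?Bs, ?Bt).

Lemma p_hassoc (C D E B : GenCat) (F G : C -> D) (F' G' : D -> E) (F'' G'' : E -> B)
          (alpha : C -> D) (beta : D -> E) (gamma : E -> B) :
      is_2cell F G alpha -> is_2cell F' G' beta -> is_2cell F'' G'' gamma ->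
      forall x : C,
        hcomp (comp1 F' F) G'' gamma (hcomp F G' beta alpha) x =
        hcomp F (comp1 G'' G') (hcomp F' G'' gamma beta) alpha x.
Proof. intros A Bb Cc x.
 destruct (two_props _ _ _ A) as (HF&HG&As&At&An).
 destruct (two_props _ _ _ Bb) as (HF'&HG'&Bs&Bt&Bn).
 destruct (two_props _ _ _ Cc) as (HF''&HG''&Cs&Ct&Cn).
 unfold hcomp, comp1. rewrite (fmul G'' HG''). rewrite massoc; auto.
 - rewrite <- (fsrc G'' HG''), <- (ftgt G'' HG''). f_equal. 
   norm2 F HF G HG F' HF' G' HG' As At Bs Bt. reflexivity.
 - rewrite <- (fsrc G'' HG''), Ct. f_equal. rewrite Bs. reflexivity.
 - norm2 F HF G HG F' HF' G' HG' As At Bs Bt. reflexivity.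
Qed.

Lemma p_hunit (C D : GenCat) (F G : C -> D) (alpha : C -> D) :
      is_2cell F G alpha ->
      forall x : C,
        hcomp F (id1 D) (id2 (id1 D)) alpha x = alpha x /\
        hcomp (id1 C) G alpha (id2 (id1 C)) x = alpha x.
Proof. intros A x.
 destruct (two_props _ _ _ A) as (HF&HG&As&At&An).
 unfold hcomp, id2, id1. split.
 apply one_mulr. rewrite As, tgt_one. apply le_refl.
 rewrite (fone G HG). apply one_mull. rewrite At, src_one. apply le_refl.
Qed.

Lemma p_hid (C D E : GenCat) (F : C -> D) (F' : D -> E) :
      is_functor F -> is_functor F' ->
      forall x : C, hcomp F F' (id2 F') (id2 F) x = id2 (comp1 F' F) x.
Proof. intros HF HF' x. unfold hcomp, id2, comp1. rewrite (fone F' HF').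
 apply one_mull. rewrite src_one, tgt_one. apply le_refl. Qed.

Lemma p_inter (C D E : GenCat) (F G H : C -> D) (F' G' H' : D -> E)
          (alpha alpha' : C -> D) (beta beta' : D -> E) :
      is_2cell F G alpha -> is_2cell G H alpha' ->
      is_2cell F' G' beta -> is_2cell G' H' beta' ->
      forall x : C,
        hcomp F H' (vcomp beta' beta) (vcomp alpha' alpha) x =
        vcomp (hcomp G H' beta' alpha') (hcomp F G' beta alpha) x.
Proof. intros A A' Bb Bb' x.
 destruct (two_props _ _ _ A) as (HF&HG&As&At&An).
 destruct (two_props _ _ _ A') as (_&HH&As'&At'&An').
 destruct (two_props _ _ _ Bb) as (HF'&HG'&Bs&Bt&Bn).
 destruct (two_props _ _ _ Bb') as (_&HH'&Bs'&Bt'&Bn').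
 unfold hcomp, vcomp.
 pose proof (Bn' (alpha x)) as N. rewrite At, As in N.
 rewrite (fmul H' HH'), massoc, <- (massoc _ (H' (alpha x))), <- N, massoc, <- massoc; auto.
 all: norm2 F HF G HG F' HF' G' HG' As At Bs Bt;
      norm2 H HH H' HH' F' HF' G' HG' As' At' Bs' Bt';
      norm2 F HF G HG F' HF' G' HG' As At Bs Bt; try reflexivity.
 all: rewrite mtgt; norm2 F HF G HG F' HF' G' HG' As At Bs Bt;
      norm2 H HH H' HH' F' HF' G' HG' As' At' Bs' Bt'; reflexivity.
Qed.


Theorem mainTheorem1 :
  (* 1-cells: identities are functors, functors compose, associatively and unitally *)
  (forall C : GenCat, is_functor (id1 C)) /\
  (forall (C D E : GenCat) (F : C -> D) (G : D -> E),
      is_functor F -> is_functor G -> is_functor (comp1 G F)) /\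
  (forall (C D E B : GenCat) (F : C -> D) (G : D -> E) (H : E -> B) (x : C),
      comp1 H (comp1 G F) x = comp1 (comp1 H G) F x) /\
  (forall (C D : GenCat) (F : C -> D) (x : C),
      comp1 F (id1 C) x = F x /\ comp1 (id1 D) F x = F x) /\
  (* identity 2-cells *)
  (forall (C D : GenCat) (F : C -> D), is_functor F -> is_2cell F F (id2 F)) /\
  (* vertical composition is well defined *)
  (forall (C D : GenCat) (F G H : C -> D) (alpha beta : C -> D),
      is_2cell F G alpha -> is_2cell G H beta -> is_2cell F H (vcomp beta alpha)) /\
  (* vertical composition is associative *)
  (forall (C D : GenCat) (F G H K : C -> D) (alpha beta gamma : C -> D),
      is_2cell F G alpha -> is_2cell G H beta -> is_2cell H K gamma ->
      forall x : C,
        vcomp gamma (vcomp beta alpha) x = vcomp (vcomp gamma beta) alpha x) /\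
  (* vertical unit laws *)
  (forall (C D : GenCat) (F G : C -> D) (alpha : C -> D),
      is_2cell F G alpha ->
      forall x : C, vcomp alpha (id2 F) x = alpha x /\ vcomp (id2 G) alpha x = alpha x) /\
  (* horizontal composition is well defined *)
  (forall (C D E : GenCat) (F G : C -> D) (F' G' : D -> E) (alpha : C -> D) (beta : D -> E),
      is_2cell F G alpha -> is_2cell F' G' beta ->
      is_2cell (comp1 F' F) (comp1 G' G) (hcomp F G' beta alpha)) /\
  (* horizontal composition is associative *)
  (forall (C D E B : GenCat) (F G : C -> D) (F' G' : D -> E) (F'' G'' : E -> B)
          (alpha : C -> D) (beta : D -> E) (gamma : E -> B),
      is_2cell F G alpha -> is_2cell F' G' beta -> is_2cell F'' G'' gamma ->
      forall x : C,
        hcomp (comp1 F' F) G'' gamma (hcomp F G' beta alpha) x =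
        hcomp F (comp1 G'' G') (hcomp F' G'' gamma beta) alpha x) /\
  (* horizontal unit laws: the identity 2-cell of the identity 1-cell *)
  (forall (C D : GenCat) (F G : C -> D) (alpha : C -> D),
      is_2cell F G alpha ->
      forall x : C,
        hcomp F (id1 D) (id2 (id1 D)) alpha x = alpha x /\
        hcomp (id1 C) G alpha (id2 (id1 C)) x = alpha x) /\
  (* horizontal composition of identity 2-cells *)
  (forall (C D E : GenCat) (F : C -> D) (F' : D -> E),
      is_functor F -> is_functor F' ->
      forall x : C, hcomp F F' (id2 F') (id2 F) x = id2 (comp1 F' F) x) /\
  (* interchange law *)
  (forall (C D E : GenCat) (F G H : C -> D) (F' G' H' : D -> E)
          (alpha alpha' : C -> D) (beta beta' : D -> E),
      is_2cell F G alpha -> is_2cell G H alpha' ->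
      is_2cell F' G' beta -> is_2cell G' H' beta' ->
      forall x : C,
        hcomp F H' (vcomp beta' beta) (vcomp alpha' alpha) x =
        vcomp (hcomp G H' beta' alpha') (hcomp F G' beta alpha) x).
Proof.
  split. exact p_id. split. exact p_comp. split. reflexivity.
  split. split; reflexivity. split. exact p_id2. split. exact p_vcomp.
  split. exact p_vassoc. split. exact p_vunit. split. exact p_hcomp.
  split. exact p_hassoc. split. exact p_hunit. split. exact p_hid.
  exact p_inter.
Qed.
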